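(* Let $Q$ be a real symmetric matrix acting on $(\mathbb{R}^M)^{\otimes N}$. Then the following are equivalent: 1. $\langle\psi|Q|\psi\rangle=0$ for all $\psi\in V$; 2. $\sum_{\tau\subseteq\{1,\dots,N\}}Q^{T_\tau}=0$, the sum running over all $2^N$ subsets $\tau$; 3. $Q=\sum_g c_g\bigotimes_{k=1}^N G_{g_k}$ with real coefficients $c_g$, where $c_g=0$ whenever all components of $g=(g_1,\dots,g_N)$ are non-negative.
   Context: $V$ denotes the set of normalized real product vectors $\psi=\psi_1\otimes\cdots\otimes\psi_N$ with $\psi_k\in\mathbb{R}^M$. $Q^{T_\tau}$ is the partial transpose of $Q$ (in the standard basis) on the tensor factors in $\tau$. $\{G_\gamma\}$ is a set of $M^2$ real $M\times M$ matrices (''generalized Gell-Mann matrices'') forming a basis of all real $M\times M$ matrices, orthogonal w.r.t. the Hilbert–Schmidt inner product $(X,Y)\mapsto\mathrm{tr}[XY^T]$, with $G_0=\mathbb{1}$, $G_\gamma$ symmetric for $\gamma\ge0$ (there are $M(M+1)/2$ such indices) and antisymmetric for $\gamma<0$ (there are $M(M-1)/2$ such indices), normalized by $\mathrm{tr}[G_\gamma G_{\gamma'}^T]=2\delta_{\gamma\gamma'}$ for $\gamma,\gamma'\ne0$. The index $g$ ranges over $N$-tuples of such indices. *)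

(* Defs.v *)
From HB Require Import structures.
From mathcomp Require Import all_boot all_order all_algebra.
From mathcomp Require Import reals.
Set Implicit Arguments. Unset Strict Implicit. Unset Printing Implicit Defensive.
Import Order.TTheory GRing.Theory Num.Theory.
Local Open Scope ring_scope.

(* The space (R^M)^{\otimes N} has basis indexed by multi-indices
   i = (i_1,...,i_N) with i_k : 'I_M.  We use the finType of such
   multi-indices, and matrices over (R^M)^{\otimes N} are square matrices
   of size #|mindex N M| (= M^N), whose row/column index i : 'I_#|mindex N M|
   is decoded into a multi-index by enum_val (the standard basis order). *)
Definition mindex (N M : nat) := {ffun 'I_N -> 'I_M}.
Definition tdim (N M : nat) := #|{: mindex N M}|.

Definition mi {N M : nat} (i : 'I_(tdim N M)) : mindex N M := enum_val i.
Definition mrank {N M : nat} (a : mindex N M) : 'I_(tdim N M) := enum_rank a.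

Definition tensor_vec {R : nzRingType} {N M : nat} (psi : 'I_N -> 'cV[R]_M)
  : 'cV[R]_(tdim N M) :=
  \col_i \prod_(k < N) psi k (mi i k) 0.

Definition in_V {R : realType} {N M : nat} (v : 'cV[R]_(tdim N M)) : Prop :=
  (exists psi : 'I_N -> 'cV[R]_M, v = tensor_vec psi) /\ (v^T *m v) 0 0 = 1.

Definition expval {R : nzRingType} {n : nat} (Q : 'M[R]_n) (v : 'cV[R]_n) : R :=
  (v^T *m Q *m v) 0 0.

(* partial transpose on the tensor factors in tau (standard basis):
   (Q^{T_tau})_{i,j} = Q_{i',j'} where i'_k = j_k, j'_k = i_k for k in tau,
   and i'_k = i_k, j'_k = j_k otherwise. *)
Definition pt_swap {N M : nat} (tau : {set 'I_N}) (a b : mindex N M) : mindex N M :=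
  [ffun k => if k \in tau then b k else a k].

Definition ptrans {R : Type} {N M : nat} (tau : {set 'I_N})
  (Q : 'M[R]_(tdim N M)) : 'M[R]_(tdim N M) :=
  \matrix_(i, j) Q (mrank (pt_swap tau (mi i) (mi j)))
                   (mrank (pt_swap tau (mi j) (mi i))).

Definition tensor_mx {R : nzRingType} {N M : nat} (A : 'I_N -> 'M[R]_M)
  : 'M[R]_(tdim N M) :=
  \matrix_(i, j) \prod_(k < N) A k (mi i k) (mi j k).

Definition hs {R : nzRingType} {M : nat} (X Y : 'M[R]_M) : R := \tr (X *m Y^T).

(* A family of generalized Gell-Mann matrices, indexed by a finite type Gam.
   nonneg gam  encodes "gam >= 0" and g0 is the index 0. *)
Definition gell_mann_family {R : realType} (M : nat) (Gam : finType)
  (G : Gam -> 'M[R]_M) (nonneg : Gam -> bool) (g0 : Gam) : Prop :=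
     #|{: Gam}| = (M * M)%N
  /\ (forall X : 'M[R]_M, exists c : Gam -> R, X = \sum_(g : Gam) c g *: G g)
  /\ (forall g g', g != g' -> hs (G g) (G g') = 0)
  /\ G g0 = 1%:M /\ nonneg g0
  /\ (forall g g', g != g0 -> g' != g0 -> hs (G g) (G g') = (2 * (g == g')%:R))
  /\ (forall g, nonneg g -> (G g)^T = G g)
  /\ (forall g, ~~ nonneg g -> (G g)^T = - G g)
  /\ (#|[set g | nonneg g]| = (M * (M + 1)) %/ 2)%N
  /\ (#|[set g | ~~ nonneg g]| = (M * (M - 1)) %/ 2)%N.

(* Main.v *)
Require Import Defs.
From HB Require Import structures.
From mathcomp Require Import all_boot all_order all_algebra.
From mathcomp Require Import reals.
From mathcomp Require Import zify.
Import Order.TTheory GRing.Theory Num.Theory.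
Set Implicit Arguments. Unset Strict Implicit.
Local Open Scope ring_scope.

Section Aux.
Variable R : realType.
Variables N M : nat.
Implicit Types (f h : 'I_N -> 'cV[R]_M) (P Q : 'M[R]_(tdim N M)).

Definition Bf P f h := ((tensor_vec f)^T *m P *m tensor_vec h) 0 0.
Definition tf f (a : mindex N M) : R := \prod_k f k (a k) 0.
Definition swf (tau : {set 'I_N}) f h := fun j => if j \in tau then h j else f j.
Definition upd f k (x : 'cV[R]_M) := fun j => if j == k then x else f j.
Definition sdiff (tau s : {set 'I_N}) := [set j | (j \in tau) (+) (j \in s)].

Lemma sdiffK s : cancel (sdiff^~ s) (sdiff^~ s).
Proof. by move=> t; apply/setP => j; rewrite !inE; case: (j \in t); case: (j \in s). Qed.

Lemma sum_mrank (F : 'I_(tdim N M) -> R) :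
  \sum_i F i = \sum_(a : mindex N M) F (mrank a).
Proof.
rewrite (reindex mrank) //; exists mi => x _; [exact: enum_rankK | exact: enum_valK].
Qed.

Lemma tv_ext f g : f =1 g -> tensor_vec f = tensor_vec g.
Proof. by move=> H; apply/matrixP => i j; rewrite !mxE; apply: eq_bigr => k _; rewrite H. Qed.

Lemma Bf_ext P f f' h h' : f =1 f' -> h =1 h' -> Bf P f h = Bf P f' h'.
Proof. by move=> H1 H2; rewrite /Bf (tv_ext H1) (tv_ext H2). Qed.

Lemma Bf_sum P f h :
  Bf P f h = \sum_a \sum_b tf f a * P (mrank a) (mrank b) * tf h b.
Proof.
rewrite /Bf mxE sum_mrank exchange_big /=; apply: eq_bigr => b _.
rewrite mxE big_distrl sum_mrank /=; apply: eq_bigr => a _.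
by rewrite !mxE /tf /mi !enum_rankK.
Qed.

Lemma swK (tau : {set 'I_N}) (a b : mindex N M) :
  pt_swap tau (pt_swap tau a b) (pt_swap tau b a) = a.
Proof. by apply/ffunP => k; rewrite !ffunE; case: (k \in tau). Qed.

Lemma Bpt tau P f h : Bf (ptrans tau P) f h = Bf P (swf tau f h) (swf tau h f).
Proof.
rewrite !Bf_sum !pair_bigA /=.
pose sg := fun p : mindex N M * mindex N M =>
  (pt_swap tau p.1 p.2, pt_swap tau p.2 p.1).
have sgK : cancel sg sg by move=> [a b]; rewrite /sg /= !swK.
rewrite (reindex_inj (can_inj sgK)) /=; apply: eq_bigr => [[a b]] _ /=.
rewrite !mxE /mi !enum_rankK !swK !(mulrAC _ (P _ _)); congr (_ * _).
rewrite /tf -!big_split /=; apply: eq_bigr => k _.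
by rewrite /swf !ffunE; case: (k \in tau) => //; rewrite mulrC.
Qed.

Lemma Bf_sumP (I : finType) (F : I -> 'M[R]_(tdim N M)) f h :
  Bf (\sum_i F i) f h = \sum_i Bf (F i) f h.
Proof. by rewrite /Bf mulmx_sumr mulmx_suml summxE. Qed.

Lemma tv_upd f k x i :
  tensor_vec (upd f k x) i 0 = x (mi i k) 0 * \prod_(j | j != k) f j (mi i j) 0.
Proof.
rewrite mxE (bigD1 k) //= /upd eqxx; congr (_ * _).
by apply: eq_bigr => j /negbTE ->.
Qed.

Lemma tv_updD f k x y :
  tensor_vec (upd f k (x + y)) = tensor_vec (upd f k x) + tensor_vec (upd f k y).
Proof. by apply/matrixP => i j; rewrite ord1 [in RHS]mxE !tv_upd mxE mulrDl. Qed.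

Lemma tv_updZ f k c :
  tensor_vec (upd f k (c *: f k)) = c *: tensor_vec f.
Proof.
apply/matrixP => i j; rewrite ord1 tv_upd.
rewrite !mxE [X in _ = _ * X](bigD1 k) //= mulrA.
by [].
Qed.

Lemma BfDl P f h k x y :
  Bf P (upd f k (x + y)) h = Bf P (upd f k x) h + Bf P (upd f k y) h.
Proof. by rewrite /Bf tv_updD linearD /= !mulmxDl mxE. Qed.

Lemma BfDr P f h k x y :
  Bf P f (upd h k (x + y)) = Bf P f (upd h k x) + Bf P f (upd h k y).
Proof. by rewrite /Bf tv_updD !mulmxDr mxE. Qed.


Lemma prod_bool (b : 'I_N -> bool) :
  \prod_k ((b k)%:R : R) = ([forall k, b k])%:R.
Proof.
case E: [forall k, b k].
  by rewrite big1 // => k _; rewrite (forallP E k).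
move: E => /negbT; rewrite negb_forall => /existsP [k Hk].
by rewrite (bigD1 k) //= (negbTE Hk) mul0r.
Qed.

Lemma ffun_eqE (a b : mindex N M) : [forall k, a k == b k] = (a == b).
Proof.
apply/forallP/eqP => [H | -> k //]; apply/ffunP => k; exact/eqP/H.
Qed.

Definition ee (a : mindex N M) : 'I_N -> 'cV[R]_M := fun k => delta_mx (a k) 0.

Lemma tv_delta a : tensor_vec (ee a) = delta_mx (mrank a) 0.
Proof.
apply/matrixP => i z; rewrite ord1 !mxE.
under eq_bigr do rewrite mxE eqxx andbT.
rewrite prod_bool ffun_eqE.
rewrite eqxx andbT; congr (_%:R); congr nat_of_bool.
apply/idP/idP => /eqP H; apply/eqP.
  by rewrite -H /mrank /mi enum_valK.
by rewrite H /mi /mrank enum_rankK.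
Qed.

Lemma Bf_delta P a b : Bf P (ee a) (ee b) = P (mrank a) (mrank b).
Proof.
by rewrite /Bf !tv_delta trmx_delta -rowE -colE !mxE.
Qed.

Section PQ.
Variable Q : 'M[R]_(tdim N M).
Hypothesis HQ0 : forall f, Bf Q f f = 0.
Let P := \sum_(tau : {set 'I_N}) ptrans tau Q.

Lemma PB0 f : Bf P f f = 0.
Proof.
rewrite Bf_sumP big1 // => tau _; rewrite Bpt -(HQ0 f).
by apply: Bf_ext => j; rewrite /swf; case: ifP.
Qed.

Lemma Pinv s f h : Bf P f h = Bf P (swf s f h) (swf s h f).
Proof.
rewrite !Bf_sumP [RHS](reindex_inj (can_inj (sdiffK s))) /=.
apply: eq_bigr => tau _; rewrite !Bpt; apply: Bf_ext => j;
by rewrite /swf inE; case: (j \in tau); case: (j \in s).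
Qed.

Lemma claim n f h : (#|[set j | f j != h j]| <= n)%N -> Bf P f h = 0.
Proof.
elim: n f h => [|n IH] f h Hc.
  move: Hc; rewrite leqn0 cards_eq0 => /eqP E.
  rewrite -(PB0 f); apply: Bf_ext => // j; apply/eqP.
  have : j \notin [set j | f j != h j] by rewrite E inE.
  by rewrite inE negbK eq_sym.
case: (boolP ([set j | f j != h j] == set0)) => [/eqP E | /set0Pn [k Hk]].
  by apply: IH; rewrite E cards0.
have HUW : forall p, Bf P (upd f k p) (upd h k p) = 0.
  move=> p; apply: IH.
  apply: (@leq_trans #|[set j | f j != h j] :\ k|).
    apply: subset_leq_card; apply/subsetP => j; rewrite !inE /upd.
    by case: (j == k) => //=; rewrite eqxx.
  by move: Hc; rewrite (cardsD1 k) Hk.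
have := HUW (f k + h k).
rewrite BfDl !BfDr !HUW add0r addr0.
have -> : Bf P (upd f k (f k)) (upd h k (h k)) = Bf P f h.
  by apply: Bf_ext => j; rewrite /upd; case: eqP => // ->.
rewrite (Pinv [set k] (upd f k (h k))).
have -> : Bf P (swf [set k] (upd f k (h k)) (upd h k (f k)))
    (swf [set k] (upd h k (f k)) (upd f k (h k))) = Bf P f h.
  by apply: Bf_ext => j; rewrite /swf /upd inE; case: eqP => // ->.
by move/eqP; rewrite -mulr2n mulrn_eq0 /= => /eqP.
Qed.

Lemma P0 : P = 0.
Proof.
apply/matrixP => i j; rewrite mxE.
rewrite -(enum_valK i) -(enum_valK j) -[enum_rank _]/(mrank (mi i)) -[enum_rank (enum_val j)]/(mrank (mi j)).
rewrite -Bf_delta; apply: (@claim N).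
by apply: leq_trans (max_card _) _; rewrite card_ord.
Qed.

End PQ.

Lemma expval0 Q : (forall v, in_V v -> expval Q v = 0) -> forall f, Bf Q f f = 0.
Proof.
move=> H f; rewrite /Bf; set v := tensor_vec f.
set s := (v^T *m v) 0 0.
have s_sum : s = \sum_i v i 0 ^+ 2.
  by rewrite /s mxE; apply: eq_bigr => i _; rewrite mxE expr2.
have s_ge0 : 0 <= s by rewrite s_sum; apply: sumr_ge0 => i _; exact: sqr_ge0.
case: (eqVneq s 0) => [s0 | sn0].
  have v0 : v = 0.
    apply/matrixP => i j; rewrite ord1 [RHS]mxE; apply/eqP; rewrite -sqrf_eq0; apply/eqP.
    apply: (@psumr_eq0P _ _ predT (fun i => v i 0 ^+ 2)) => //; [move=> ? _; exact: sqr_ge0 | by rewrite -s_sum].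
  by rewrite v0 mulmx0 mxE.
case: (posnP N) => [N0 | Npos].
  apply: H; split; first by exists f.
  rewrite -/s s_sum.
  have v1 : forall i, v i 0 = 1.
    by move=> i; rewrite mxE big1 // => k; have := ltn_ord k; rewrite {2}N0.
  under eq_bigr do rewrite v1 expr1n.
  by rewrite sumr_const card_ord /tdim card_ffun !card_ord N0 expn0.
pose k := Ordinal Npos.
pose c := (Num.sqrt s)^-1.
have sq : Num.sqrt s ^+ 2 = s by rewrite sqr_sqrtr.
have cn0 : c != 0 by rewrite invr_eq0 sqrtr_eq0 -ltNge lt_def sn0 s_ge0.
have Hv := H (c *: v).
have : expval Q (c *: v) = 0.
  apply: Hv; split; first by exists (upd f k (c *: f k)); rewrite tv_updZ.
  rewrite [X in X *m _]linearZ /= -scalemxAl linearZ /= scalerA mxE -/s -expr2 exprVn sq mulVf //.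
rewrite /expval [X in X *m _ *m _]linearZ /= -scalemxAl linearZ /= -scalemxAl scalerA mxE => /eqP.
by rewrite !mulf_eq0 (negbTE cn0) /= => /eqP.
Qed.

Lemma Bf_pt_self tau Q f : Bf (ptrans tau Q) f f = Bf Q f f.
Proof. by rewrite Bpt; apply: Bf_ext => j; rewrite /swf; case: ifP. Qed.

Section Basis.
Variable Gam : finType.
Variable G : Gam -> 'M[R]_M.
Variable nonneg : Gam -> bool.
Definition Tg (g : {ffun 'I_N -> Gam}) := tensor_mx (fun k => G (g k)).

Lemma ptrans_lin (I : finType) tau (c : I -> R) (A : I -> 'M[R]_(tdim N M)) :
  ptrans tau (\sum_i c i *: A i) = \sum_i c i *: ptrans tau (A i).
Proof.
by apply/matrixP => i j; rewrite !mxE !summxE; apply: eq_bigr => x _; rewrite !mxE.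
Qed.

Lemma Qexp (Q : 'M[R]_(tdim N M)) :
  Q = \sum_i \sum_j Q i j *: tensor_mx (fun k => delta_mx (mi i k) (mi j k)).
Proof.
apply/matrixP => i0 j0; rewrite summxE.
under eq_bigr => i _ do rewrite summxE.
have F : forall i j, (Q i j *: tensor_mx (fun k => delta_mx (mi i k) (mi j k))) i0 j0
    = Q i j * ((i0 == i) && (j0 == j))%:R.
  move=> i j; rewrite !mxE; congr (_ * _).
  under eq_bigr do rewrite mxE.
  rewrite prod_bool; congr (_%:R); congr nat_of_bool.
  have -> : [forall k, (mi i0 k == mi i k) && (mi j0 k == mi j k)]
     = [forall k, mi i0 k == mi i k] && [forall k, mi j0 k == mi j k].
    apply/forallP/andP => [H | [/forallP H1 /forallP H2] k].
      by split; apply/forallP => k; case/andP: (H k).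
    by rewrite H1 H2.
  by rewrite !ffun_eqE !(inj_eq enum_val_inj).
under eq_bigr => i _ do under eq_bigr => j _ do rewrite F.
rewrite (bigD1 i0) //= [X in X + _](bigD1 j0) //=.
rewrite !eqxx /= mulr1n mulr1 big1 ?addr0; last first.
  by move=> j Hj; rewrite eq_sym (negbTE Hj) mulr0.
rewrite big1 ?addr0 // => i Hi; apply: big1 => j _.
by rewrite eq_sym (negbTE Hi) mulr0.
Qed.

Lemma tensor_ext (A B : 'I_N -> 'M[R]_M) : A =1 B -> tensor_mx A = tensor_mx B.
Proof. by move=> H; apply/matrixP => i j; rewrite !mxE; apply: eq_bigr => k _; rewrite H. Qed.

Lemma tensor_scale (a : 'I_N -> R) (A : 'I_N -> 'M[R]_M) :
  tensor_mx (fun k => a k *: A k) = (\prod_k a k) *: tensor_mx A.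
Proof.
by apply/matrixP => i j; rewrite !mxE -big_split; apply: eq_bigr => k _; rewrite mxE.
Qed.

Definition eps (g : {ffun 'I_N -> Gam}) (tau : {set 'I_N}) : R :=
  \prod_j (if (j \in tau) && ~~ nonneg (g j) then -1 else 1).

Hypothesis Hsym : forall g, nonneg g -> (G g)^T = G g.
Hypothesis Hanti : forall g, ~~ nonneg g -> (G g)^T = - G g.

Lemma pt_T (tau : {set 'I_N}) (g : {ffun 'I_N -> Gam}) : ptrans tau (Tg g) = eps g tau *: Tg g.
Proof.
rewrite /eps -tensor_scale; apply/matrixP => i j; rewrite !mxE.
apply: eq_bigr => k _; rewrite /mi !enum_rankK !ffunE.
case Ht: (k \in tau) => /=; last by rewrite mxE mul1r.
case Hn: (nonneg (g k)) => /=.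
  by rewrite -{1}(Hsym Hn) !mxE mul1r.
have E : G (g k) = - (G (g k))^T by rewrite Hanti ?Hn // opprK.
by rewrite {1}E !mxE mulN1r.
Qed.

Lemma sum_eps_neg (g : {ffun 'I_N -> Gam}) (k : 'I_N) : ~~ nonneg (g k) -> \sum_tau eps g tau = 0.
Proof.
move=> Hk.
have Hs : \sum_tau eps g tau = - \sum_tau eps g tau.
  rewrite {1}(reindex_inj (can_inj (sdiffK [set k]))) /= -sumrN.
  apply: eq_bigr => tau _.
  rewrite /eps /sdiff (bigD1 k) //= [X in _ = - X](bigD1 k) //= !inE eqxx Hk /=.
  rewrite (eq_bigr (fun j => if (j \in tau) && ~~ nonneg (g j) then -1 else 1)); last first.
    by move=> j /negbTE Hj; rewrite ?inE Hj addbF.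
  by case: (k \in tau) => /=; rewrite ?mulN1r ?mul1r ?opprK.
move/eqP: Hs; rewrite -subr_eq0 opprK -mulr2n mulrn_eq0 /= => /eqP //.
Qed.

Lemma eps_nn (g : {ffun 'I_N -> Gam}) (tau : {set 'I_N}) : (forall k, nonneg (g k)) -> eps g tau = 1.
Proof. by move=> H; apply: big1 => j _; rewrite H andbF. Qed.


Lemma tensor_distr (a : 'I_N -> Gam -> R) :
  tensor_mx (fun k => \sum_gm a k gm *: G gm)
  = \sum_(g : {ffun 'I_N -> Gam}) (\prod_k a k (g k)) *: Tg g.
Proof.
apply/matrixP => i j; rewrite !mxE summxE.
under eq_bigr => k _ do rewrite summxE.
under eq_bigr => k _ do under eq_bigr => gm _ do rewrite mxE.
rewrite bigA_distr_bigA /=; apply: eq_bigr => g _.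
by rewrite !mxE -big_split.
Qed.

Lemma span_tensor : (forall X : 'M[R]_M, exists c : Gam -> R, X = \sum_gm c gm *: G gm) ->
  forall Q : 'M[R]_(tdim N M), exists c : {ffun 'I_N -> Gam} -> R,
    Q = \sum_g c g *: Tg g.
Proof.
move=> HX Q.
have [d Hd] := fin_all_exists (fun p : 'I_M * 'I_M => HX (delta_mx p.1 p.2)).
exists (fun g : {ffun 'I_N -> Gam} => \sum_i \sum_j Q i j * \prod_k d (mi i k, mi j k) (g k)).
rewrite {1}(Qexp Q).
have E : forall i j, tensor_mx (fun k => delta_mx (mi i k) (mi j k))
   = \sum_(g : {ffun 'I_N -> Gam}) (\prod_k d (mi i k, mi j k) (g k)) *: Tg g.
  by move=> i j; rewrite -(tensor_distr (fun k gm => d (mi i k, mi j k) gm)); apply: tensor_ext => k; rewrite -Hd.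
under eq_bigr => i _ do under eq_bigr => j _ do rewrite E scaler_sumr.
under eq_bigr => i _ do rewrite exchange_big.
rewrite exchange_big; apply: eq_bigr => g _.
rewrite scaler_suml; apply: eq_bigr => i _.
rewrite scaler_suml; apply: eq_bigr => j _.
by rewrite scalerA.
Qed.

End Basis.
End Aux.

Unset Implicit Arguments.
Theorem proposition5 (R : realType) (N M : nat) (Gam : finType)
  (G : Gam -> 'M[R]_M) (nonneg : Gam -> bool) (g0 : Gam)
  (HG : gell_mann_family G nonneg g0)
  (Q : 'M[R]_(tdim N M)) (HQ : Q^T = Q) :
  [/\ ((forall v, in_V v -> expval Q v = 0) <->
       \sum_(tau : {set 'I_N}) ptrans tau Q = 0),
      (\sum_(tau : {set 'I_N}) ptrans tau Q = 0 <->
       exists c : {ffun 'I_N -> Gam} -> R,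
         Q = \sum_(g : {ffun 'I_N -> Gam}) c g *: tensor_mx (fun k => G (g k)) /\
         (forall g : {ffun 'I_N -> Gam}, (forall k, nonneg (g k)) -> c g = 0)) &
      ((forall v, in_V v -> expval Q v = 0) <->
       exists c : {ffun 'I_N -> Gam} -> R,
         Q = \sum_(g : {ffun 'I_N -> Gam}) c g *: tensor_mx (fun k => G (g k)) /\
         (forall g : {ffun 'I_N -> Gam}, (forall k, nonneg (g k)) -> c g = 0))].
Proof.
case: HG => _ [HX [_ [_ [_ [_ [Hsym [Hanti _]]]]]]].
set S := \sum_(tau : {set 'I_N}) ptrans tau Q.
have cardn0 : (#|{: {set 'I_N}}| != 0)%N.
  by rewrite -lt0n; apply/card_gt0P; exists set0.
have H12 : (forall v, in_V v -> expval Q v = 0) <-> S = 0.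
  split; first by move=> H; exact: (P0 (expval0 H)).
  move=> HS v [[f ->] _].
  have : Bf S f f = 0 by rewrite HS /Bf mulmx0 mul0mx mxE.
  rewrite Bf_sumP.
  under eq_bigr do rewrite Bf_pt_self.
  rewrite sumr_const => /eqP; rewrite mulrn_eq0 (negbTE cardn0) /= => /eqP H; exact: H.
have Sexp : forall c : {ffun 'I_N -> Gam} -> R,
    \sum_(tau : {set 'I_N}) ptrans tau (\sum_g c g *: Tg G g)
    = \sum_g (c g * \sum_(tau : {set 'I_N}) eps R nonneg g tau) *: Tg G g.
  move=> c.
  under eq_bigr => tau _ do rewrite ptrans_lin.
  rewrite exchange_big; apply: eq_bigr => g _.
  rewrite mulr_sumr scaler_suml; apply: eq_bigr => tau _.
  by rewrite (pt_T Hsym Hanti) scalerA.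
have epsE : forall g : {ffun 'I_N -> Gam},
    \sum_(tau : {set 'I_N}) eps R nonneg g tau
    = if [forall k, nonneg (g k)] then (#|{: {set 'I_N}}|)%:R else 0.
  move=> g; case E: [forall k, nonneg (g k)].
    rewrite (eq_bigr (fun _ => 1)); first by rewrite sumr_const.
    by move=> tau _; apply: eps_nn => k; exact: (forallP E k).
  move: E => /negbT; rewrite negb_forall => /existsP [k Hk].
  exact: (sum_eps_neg _ Hk).
have H23 : S = 0 <->
       exists c : {ffun 'I_N -> Gam} -> R,
         Q = \sum_(g : {ffun 'I_N -> Gam}) c g *: tensor_mx (fun k => G (g k)) /\
         (forall g : {ffun 'I_N -> Gam}, (forall k, nonneg (g k)) -> c g = 0).
  split.
    move=> HS; have [c Hc] := span_tensor HX Q.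
    exists (fun g : {ffun 'I_N -> Gam} => if [forall k, nonneg (g k)] then 0 else c g); split; last first.
      by move=> g H; have -> : [forall k, nonneg (g k)] = true by apply/forallP.
    set Z := \sum_(g : {ffun 'I_N -> Gam}) (if [forall k, nonneg (g k)] then c g else 0) *: Tg G g.
    have KZ : (#|{: {set 'I_N}}|)%:R *: Z = 0.
      rewrite -HS /S Hc Sexp scaler_sumr; apply: eq_bigr => g _.
      rewrite epsE scalerA.
      by case: ifP => _; rewrite ?mulr0 // mulrC.
    have Z0 : Z = 0.
      move/eqP: KZ; rewrite scaler_eq0 pnatr_eq0 (negbTE cardn0) /= => /eqP //.
    rewrite -[RHS]addr0 -[X in _ + X]Z0 /Z -big_split /= {1}Hc; apply: eq_bigr => g _.
    by case: ifP => _; rewrite ?scale0r ?add0r ?addr0.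
  move=> [c [HQc Hc]]; rewrite /S HQc Sexp; apply: big1 => g _.
  rewrite epsE; case E: [forall k, nonneg (g k)]; last by rewrite mulr0 scale0r.
  by rewrite Hc ?mul0r ?scale0r // => k; exact: (forallP E k).
split => //.
by rewrite H12.
Qed.
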